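(* Let $(x_i(t),v_i(t))_{i=1}^N$ follow the sticky particle Cucker–Smale dynamics, and let $\psi_i(t):=v_i(t)+\sum_{j=1}^N m_j\,\omega(x_i(t)-x_j(t))$. Fix $i\in\{1,\dots,N\}$ and a time $t>0$, and set $i_*(t):=\min J_i(t)$, $i^*(t):=\max J_i(t)$. Then for every $k\in J_i(t)$, $$\frac{\sum_{j=i_*(t)}^{k}m_j\psi_j(t-)}{\sum_{j=i_*(t)}^{k}m_j}\;\ge\;\frac{\sum_{j\in J_i(t)}m_j\psi_j(t-)}{\sum_{j\in J_i(t)}m_j}=\psi_i(t+)\;\ge\;\frac{\sum_{j=k}^{i^*(t)}m_j\psi_j(t-)}{\sum_{j=k}^{i^*(t)}m_j}.$$
   Context: Standing assumption (H): $\omega:\mathbb{R}\to[0,+\infty)$, $\omega\in W^{1,1}(\mathbb{R})\cap W^{1,\infty}(\mathbb{R})$, $\int_{\mathbb{R}}\omega\,dx=1$, and $\phi:=\omega'\in L^1(\mathbb{R})\cap L^\infty(\mathbb{R})$. Sticky particle Cucker–Smale dynamics: given $N\in\mathbb{N}$, masses $m_1,\dots,m_N>0$ with $\sum_i m_i=1$, initial positions $x_1^0\le\dots\le x_N^0$ and initial velocities $v_1^0,\dots,v_N^0$, the trajectories $(x_i(t),v_i(t))$, $t\ge0$, have continuous positions with $x_1(t)\le\dots\le x_N(t)$. Let $J_i(t):=\{j\in\{1,\dots,N\}: x_j(t)=x_i(t)\}$; particles that meet stick together, i.e. $J_i(t)\subseteq J_i(s)$ for $0\le t\le s$. A collision time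 is a time at which two or more particles that were apart come to have the same position for the first time. At times $t$ that are not collision times, $\dot x_i=v_i$ and $\dot v_i=\sum_{j=1}^N m_j\phi(x_i-x_j)(v_j-v_i)$. At a collision time $t$, the particles in $J_i(t)$ continue with the common velocity $v_i(t+)=\frac{\sum_{j\in J_i(t)}m_jv_j(t-)}{\sum_{j\in J_i(t)}m_j}$. *)

(* Defs.v *)
From HB Require Import structures.
From mathcomp Require Import all_boot all_order all_algebra.
From mathcomp Require Import all_classical all_reals all_analysis.
Set Implicit Arguments. Unset Strict Implicit. Unset Printing Implicit Defensive.
Import Order.TTheory GRing.Theory Num.Theory.
Import numFieldNormedType.Exports.
Local Open Scope classical_set_scope.
Local Open Scope ring_scope.

Section Defs.
Context {R : realType}.

(* Standing assumption (H).  omega is the (absolutely continuous) representative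
   of an element of W^{1,1} \cap W^{1,oo}; phi is a (bounded, measurable)
   representative of its weak derivative omega'. *)
Record standing_H (omega phi : R -> R) : Prop := StandingH {
  H_omega_ge0 : forall y, 0 <= omega y;
  H_omega_meas : measurable_fun setT omega;
  H_omega_L1 : (@lebesgue_measure R).-integrable setT (EFin \o omega);
  H_omega_Linf : exists M : R, forall y, `|omega y| <= M;
  H_phi_meas : measurable_fun setT phi;
  H_phi_L1 : (@lebesgue_measure R).-integrable setT (EFin \o phi);
  H_phi_Linf : exists M : R, forall y, `|phi y| <= M;
  H_omega_mass : (\int[@lebesgue_measure R]_y (omega y)%:E = 1%E)%E;
  H_phi_deriv : forall a b : R, a <= b ->
         ((omega b - omega a)%:E =
          \int[@lebesgue_measure R]_(y in `[a, b]) (phi y)%:E)%E }.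

Definition Jset N (x : 'I_N -> R -> R) (i : 'I_N) (t : R) : {set 'I_N} :=
  [set j | x j t == x i t].

Definition ilo N (x : 'I_N -> R -> R) (i : 'I_N) (t : R) : 'I_N :=
  [arg min_(j < i in Jset x i t) (j : nat)].
Definition ihi N (x : 'I_N -> R -> R) (i : 'I_N) (t : R) : 'I_N :=
  [arg max_(j > i in Jset x i t) (j : nat)].

Definition collision_time N (x : 'I_N -> R -> R) (t : R) : Prop :=
  0 < t /\ exists j k : 'I_N,
    x j t = x k t /\ forall s, 0 <= s -> s < t -> x j s <> x k s.

Definition left_lim (f : R -> R) (t : R) : R := lim (f x @[x --> t^'-]).
Definition right_lim (f : R -> R) (t : R) : R := lim (f x @[x --> t^'+]).

Record sticky_CS N (m : 'I_N -> R) (phi : R -> R) (x0 v0 : 'I_N -> R)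
  (x v : 'I_N -> R -> R) : Prop := StickyCS {
  SCS_init : forall j, x j 0 = x0 j /\ v j 0 = v0 j;
  SCS_cont : forall j, {within [set s | 0 <= s], continuous (x j)};
  SCS_order : forall t, 0 <= t -> forall j k : 'I_N, (j <= k)%N -> x j t <= x k t;
  SCS_sticky : forall (j k : 'I_N) (t s : R), 0 <= t -> t <= s ->
          x j t = x k t -> x j s = x k s;
  SCS_ode : forall t, 0 < t -> ~ collision_time x t -> forall j,
          is_derive t 1 (x j) (v j t) /\
          is_derive t 1 (v j)
            (\sum_(l : 'I_N) m l * phi (x j t - x l t) * (v l t - v j t));
  SCS_collision : forall t, collision_time x t -> forall j,
          (forall l, cvg (v l s @[s --> t^'-])) /\
          (v j s @[s --> t^'+] -->
             (\sum_(l in Jset x j t) m l * left_lim (v l) t) /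
             (\sum_(l in Jset x j t) m l)) }.

Definition psi N (m : 'I_N -> R) (omega : R -> R) (x v : 'I_N -> R -> R)
  (j : 'I_N) (s : R) : R :=
  v j s + \sum_(l : 'I_N) m l * omega (x j s - x l s).

End Defs.

(* Main.v *)
Require Import Defs.
From HB Require Import structures.
From mathcomp Require Import all_boot all_order all_algebra.
From mathcomp Require Import all_classical all_reals all_analysis.
From mathcomp Require Import measurable_realfun ring.
Import Order.TTheory GRing.Theory Num.Theory.
Import numFieldNormedType.Exports.
Local Open Scope classical_set_scope.
Local Open Scope ring_scope.
From mathcomp Require Import lra.

Lemma omega_lip {R : realType} {omega phi : R -> R} : standing_H omega phi ->
  exists M : R, 0 <= M /\ forall a b, a <= b -> `|omega b - omega a| <= M * (b - a).
Proof.
case=> _ _ _ _ phim _ [M hM] _ hd.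
have M0 : 0 <= M by apply: le_trans (hM 0); exact: normr_ge0.
exists M; split => // a b ab.
have := hd a b ab => e.
have mD : measurable (`[a, b] : set R) by exact: measurable_itv.
have mf : measurable_fun `[a, b] (fun y => (phi y)%:E).
  apply/measurable_EFinP; exact: measurable_funTS.
have h1 := le_abse_integral lebesgue_measure mD mf.
have h2 := integral_le_bound (mu := lebesgue_measure) (M%:E) mD mf (ltac:(by rewrite lee_fin)).
rewrite -lee_fin -abse_EFin e.
apply: le_trans h1 _.
apply: le_trans; first apply: h2.
  by apply: aeW => y _ /=; rewrite lee_fin.
have L := lebesgue_measure_itv `[a, b].
rewrite /= lte_fin in L.
rewrite [X in (_ * X <= _)%E](_ : _ = (if (a < b)%R then (b - a)%:E else 0%E)); last first.
  by etransitivity; [exact: L|].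
case: ifP => _; first by rewrite -EFinM.
by rewrite mule0 lee_fin mulr_ge0 // subr_ge0.
Qed.

Lemma omega_lip2 {R : realType} {omega phi : R -> R} : standing_H omega phi ->
  exists M : R, 0 <= M /\ forall a b, `|omega b - omega a| <= M * `|b - a|.
Proof.
move=> H; have [M [M0 hM]] := omega_lip H; exists M; split => // a b.
case: (leP a b) => ab.
  have h : 0 <= b - a by rewrite subr_ge0.
  by rewrite (ger0_norm h); exact: hM.
have h : 0 <= a - b by rewrite subr_ge0 ltW.
rewrite distrC (distrC b) (ger0_norm h).
exact: hM (ltW ab).
Qed.

Lemma omega_cont {R : realType} {omega phi : R -> R} : standing_H omega phi ->
  continuous omega.
Proof.
move=> H y; apply/cvgrPdist_le => e e0.
have [M [M0 hM]] := omega_lip2 H.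
have hm : 0 < e / (M + 1) by rewrite divr_gt0 // ltr_wpDl.
near=> z.
have hz : `|y - z| < e / (M + 1).
  near: z; exact: (cvgr_dist_lt id y (@cvg_id _ (nbhs y))).
apply: le_trans (hM z y) _.
apply: le_trans (ler_wpM2l M0 (ltW hz)) _.
rewrite mulrA ler_pdivrMr ?ltr_wpDl // mulrDr mulr1 mulrC lerDl ltW.
Unshelve. all: by end_near. Qed.

Lemma cvg_bigsum {R : realType} {T : Type} (F : set_system T) {FF : Filter F}
  (I : Type) (r : seq I) (P : pred I) (f : I -> T -> R) (l : I -> R) :
  (forall j, P j -> f j s @[s --> F] --> l j) ->
  (\sum_(j <- r | P j) f j s) @[s --> F] --> \sum_(j <- r | P j) l j.
Proof.
move=> h; elim: r => [|a r IH].
  have -> : (fun s => \sum_(j <- [::] | P j) f j s) = cst 0.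
    by apply/funext => s; rewrite big_nil.
  rewrite big_nil; exact: cvg_cst.
case Pa: (P a).
  have -> : (fun s => \sum_(j <- a :: r | P j) f j s) =
     (f a + (fun s => \sum_(j <- r | P j) f j s)).
    by apply/funext => s; rewrite big_cons Pa.
  rewrite big_cons Pa; apply: cvgD => //; exact: h.
have -> : (fun s => \sum_(j <- a :: r | P j) f j s) =
     (fun s => \sum_(j <- r | P j) f j s).
  by apply/funext => s; rewrite big_cons Pa.
by rewrite big_cons Pa.
Qed.

Lemma is_derive_bigsum {R : realType} (t : R)
  (I : Type) (r : seq I) (P : pred I) (f : I -> R -> R) (df : I -> R) :
  (forall j, P j -> is_derive t 1 (f j) (df j)) ->
  is_derive t 1 (fun s => \sum_(j <- r | P j) f j s) (\sum_(j <- r | P j) df j).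
Proof.
move=> h; elim: r => [|a r IH].
  have -> : (fun s => \sum_(j <- [::] | P j) f j s) = cst 0.
    by apply/funext => s; rewrite big_nil.
  rewrite big_nil; exact: is_derive_cst.
case Pa: (P a).
  have -> : (fun s => \sum_(j <- a :: r | P j) f j s) =
     (f a + (fun s => \sum_(j <- r | P j) f j s)).
    by apply/funext => s; rewrite big_cons Pa.
  rewrite big_cons Pa; apply: is_deriveD => //; exact: h.
have -> : (fun s => \sum_(j <- a :: r | P j) f j s) =
     (fun s => \sum_(j <- r | P j) f j s).
  by apply/funext => s; rewrite big_cons Pa.
by rewrite big_cons Pa.
Qed.

Lemma near_left_itv {R : realType} (t : R) (P : R -> Prop) :
  (\forall s \near t^'-, P s) ->
  exists2 e, 0 < e & forall s, t - e < s -> s < t -> P s.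
Proof.
move=> /nbhs_ballP [e e0 H]; exists e => // s h1 h2; apply: H => //.
rewrite /ball /= ger0_norm ?subr_ge0 ?ltW //.
by rewrite ltrBlDr addrC -ltrBlDr.
Qed.

From mathcomp Require Import lra.
Lemma hlp1 {R : realType} (t me : R) : 0 < me -> t - me / 2 < t.
Proof. move=> h; lra. Qed.
Lemma hlp2 {R : realType} (t me d : R) : 0 < me -> me <= d -> t - d < t - me / 2.
Proof. move=> h h'; lra. Qed.
Lemma hlp3 {R : realType} (t me e c : R) : 0 < me -> me <= e -> t - me / 2 < c -> t - e < c.
Proof. move=> h0 h h'; lra. Qed.
From mathcomp Require Import ring.
Lemma alg1 {R : realFieldType} (mP mQ aP aQ W : R) : 0 < mP -> 0 <= mQ ->
  mP * aQ <= mQ * aP ->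
  (aP + aQ + W * (mP + mQ)) / (mP + mQ) <= (aP + W * mP) / mP.
Proof.
move=> h1 h2 h3.
have s0 : 0 < mP + mQ by exact: ltr_wpDr.
have e : (aP + W * mP) / mP - (aP + aQ + W * (mP + mQ)) / (mP + mQ) =
   (mQ * aP - mP * aQ) / (mP * (mP + mQ)).
  by field; rewrite ?gt_eqF ?mulr_gt0.
rewrite -subr_ge0 e divr_ge0 // ?subr_ge0 // mulr_ge0 // ltW //.
Qed.
Lemma alg3 {R : realFieldType} (mP mQ aP aQ W : R) : 0 <= mP -> 0 < mQ ->
  mP * aQ <= mQ * aP ->
  (aQ + W * mQ) / mQ <= (aP + aQ + W * (mP + mQ)) / (mP + mQ).
Proof.
move=> h1 h2 h3.
have s0 : 0 < mP + mQ by exact: ltr_wpDl.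
have e : (aP + aQ + W * (mP + mQ)) / (mP + mQ) - (aQ + W * mQ) / mQ =
   (mQ * aP - mP * aQ) / (mQ * (mP + mQ)).
  by field; rewrite ?gt_eqF ?mulr_gt0.
rewrite -subr_ge0 e divr_ge0 // ?subr_ge0 // mulr_ge0 // ltW //.
Qed.

Section Dyn.
Context {R : realType} (omega phi : R -> R) (N : nat) (m : 'I_N -> R)
  (x0 v0 : 'I_N -> R) (x v : 'I_N -> R -> R).
Hypothesis HH : standing_H omega phi.
Hypothesis S : sticky_CS m phi x0 v0 x v.

Lemma xcont j (t : R) : 0 < t -> x j s @[s --> t] --> x j t.
Proof.
move=> t0; have : {within [set s | 0 <= s], continuous (x j)} := @SCS_cont _ _ _ _ _ _ _ _ S j.
move/(@subspace_continuousP R [set s : R | 0 <= s] R (x j)).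
move=> /(_ t (ltW t0)).
rewrite within_interior //.
exact: lt_le_nbhsr.
Qed.

Lemma vcont_nc j (t : R) : 0 < t -> ~ collision_time x t -> v j s @[s --> t] --> v j t.
Proof.
move=> t0 nc; have [_ h] := SCS_ode S t0 nc j.
apply: differentiable_continuous; apply/derivable1_diffP.
exact: (@ex_derive _ _ _ _ _ _ _ h).
Qed.

Lemma vleft j (t : R) : 0 < t -> v j s @[s --> t^'-] --> left_lim (v j) t.
Proof.
move=> t0; case: (pselect (collision_time x t)) => ct.
  have [h _] := SCS_collision S ct j; exact: h.
have h := @vcont_nc j t t0 ct.
have h' : v j s @[s --> t^'-] --> v j t by exact: cvg_within_filter.
by rewrite /left_lim (cvg_lim _ h').
Qed.

Definition Om (j : 'I_N) (t : R) := \sum_(l : 'I_N) m l * omega (x j t - x l t).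

Lemma Om_cvg j (t : R) (F : set_system R) {FF : Filter F} :
  0 < t -> (F `=>` nbhs t) ->
  Om j s @[s --> F] --> Om j t.
Proof.
move=> t0 Ft; rewrite /Om; apply: cvg_bigsum => l _.
apply: cvgM; first exact: cvg_cst.
apply: (@continuous_cvg _ _ _ _ _ (fun s => x j s - x l s) omega).
  exact: (omega_cont HH _).
apply: cvgB.
  by move=> /= A /(@xcont j t t0) /Ft.
by move=> /= A /(@xcont l t t0) /Ft.
Qed.

Lemma psi_left j (t : R) : 0 < t ->
  psi m omega x v j s @[s --> t^'-] --> left_lim (v j) t + Om j t.
Proof.
move=> t0; rewrite /psi; apply: cvgD; first exact: vleft.
apply: (@Om_cvg j t (t^'-)) => //; exact: cvg_within.
Qed.

Lemma psi_left_lim j (t : R) : 0 < t ->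
  left_lim (psi m omega x v j) t = left_lim (v j) t + Om j t.
Proof. by move=> t0; rewrite /left_lim (cvg_lim _ (@psi_left j t t0)). Qed.

Lemma Om_eq i j (t : R) : x j t = x i t -> Om j t = Om i t.
Proof. by move=> h; rewrite /Om; apply: eq_bigr => l _; rewrite h. Qed.

Lemma psi_right_col i (t : R) : 0 < t -> collision_time x t ->
  right_lim (psi m omega x v i) t =
  (\sum_(l in Jset x i t) m l * left_lim (v l) t) / (\sum_(l in Jset x i t) m l)
  + Om i t.
Proof.
move=> t0 ct; rewrite /right_lim; apply: cvg_lim => //.
rewrite /psi; apply: cvgD; first by have [_ h] := SCS_collision S ct i; exact: h.
apply: (@Om_cvg i t (t^'+)) => //; exact: cvg_within.
Qed.

Lemma psi_right_nc i (t : R) : 0 < t -> ~ collision_time x t ->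
  right_lim (psi m omega x v i) t = v i t + Om i t.
Proof.
move=> t0 ct; rewrite /right_lim; apply: cvg_lim => //.
rewrite /psi; apply: cvgD.
  apply: cvg_within_filter; exact: vcont_nc.
apply: (@Om_cvg i t (t^'+)) => //; exact: cvg_within.
Qed.

Definition pc (j k : 'I_N) (s : R) :=
  0 < s /\ x j s = x k s /\ forall r, 0 <= r -> r < s -> x j r <> x k r.

Lemma pc_uniq j k s1 s2 : pc j k s1 -> pc j k s2 -> s1 = s2.
Proof.
move=> [h1 [e1 f1]] [h2 [e2 f2]].
case: (ltgtP s1 s2) => // h; exfalso.
  by apply: (f2 s1 (ltW h1) h).
by apply: (f1 s2 (ltW h2) h).
Qed.

Lemma nocol_seq (t : R) (l : seq ('I_N * 'I_N)) : 0 < t ->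
  exists2 d, 0 < d & (d <= t /\
    forall s, t - d < s -> s < t -> forall p, p \in l -> ~ pc p.1 p.2 s).
Proof.
move=> t0; elim: l => [|p l [d d0 [dt IH]]].
  by exists t => //; split => // s _ _ p; rewrite in_nil.
case: (pselect (exists s, s < t /\ pc p.1 p.2 s)) => [[s1 [s1t pc1]]|np].
  have h1 : Num.min d (t - s1) <= d by rewrite ge_min lexx.
  have h2 : Num.min d (t - s1) <= t - s1 by rewrite ge_min lexx orbT.
  exists (Num.min d (t - s1)).
    by rewrite lt_min d0 subr_gt0.
  split; first exact: le_trans h1 dt.
  move=> s hs st q; rewrite in_cons => /orP [/eqP ->|ql].
    move=> pcs; have := @pc_uniq _ _ _ _ pc1 pcs; lra.
  apply: IH => //; lra.
exists d => //; split => // s hs st q; rewrite in_cons => /orP [/eqP ->|ql].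
  by move=> pcs; apply: np; exists s.
exact: IH.
Qed.

Lemma nocol (t : R) : 0 < t ->
  exists2 d, 0 < d & forall s, t - d < s -> s < t -> 0 < s /\ ~ collision_time x s.
Proof.
move=> t0; have [d d0 [dt H]] := @nocol_seq t (enum [set: 'I_N * 'I_N]) t0.
exists d => // s h1 h2; split; first lra.
move=> [s0 [j [k [e f]]]].
apply: (H s h1 h2 (j, k)); first by rewrite mem_enum in_setT.
by split.
Qed.

Lemma J_itv i (t : R) j : 0 <= t ->
  (j \in Jset x i t) = (ilo x i t <= j <= ihi x i t)%N.
Proof.
move=> t0; have ii : i \in Jset x i t by rewrite inE.
rewrite /ilo /ihi.
case: (arg_minnP (fun j : 'I_N => nat_of_ord j) ii) => lo Jlo minlo.
case: (arg_maxnP (fun j : 'I_N => nat_of_ord j) ii) => hi Jhi maxhi.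
apply/idP/idP.
  by move=> Jj; rewrite minlo //=; exact: maxhi.
move=> /andP [h1 h2].
have a1 := SCS_order S t0 h1.
have a2 := SCS_order S t0 h2.
have e1 : x lo t = x i t by have : lo \in Jset x i t := Jlo; rewrite inE => /eqP.
have e2 : x hi t = x i t by have : hi \in Jset x i t := Jhi; rewrite inE => /eqP.
rewrite inE; apply/eqP; apply: le_anti; rewrite -{1}e2 a2 /= -e1 a1 //.
Qed.

Lemma v_eq_nc i j (t : R) : 0 < t -> ~ collision_time x t ->
  j \in Jset x i t -> v j t = v i t.
Proof.
move=> t0 nc; rewrite inE => /eqP e.
case: (pselect (exists s0, [/\ 0 <= s0, s0 < t & x j s0 = x i s0])); last first.
  move=> ne; exfalso; apply: nc; split => //; exists j, i; split => // s h1 h2 h3.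
  by apply: ne; exists s.
move=> [s0 [h0 h1 h2]].
have nr : \forall s \near t, x j s = x i s.
  near=> s; apply: (SCS_sticky S h0) => //.
  near: s; exact: lt_le_nbhsr.
have [dj _] := SCS_ode S t0 nc j.
have [di _] := SCS_ode S t0 nc i.
rewrite -(@derive_val _ _ _ _ _ _ _ dj) -(@derive_val _ _ _ _ _ _ _ di).
exact: near_eq_derive.
Unshelve. all: by end_near. Qed.

Hypothesis mge0 : forall j, 0 <= m j.

Lemma core i (t : R) (p : nat) (P Q : {set 'I_N}) : 0 < t ->
  P = [set j in Jset x i t | (j < p)%N] ->
  Q = [set j in Jset x i t | (p <= j)%N] ->
  (\sum_(j in P) m j) * (\sum_(j in Q) m j * left_lim (v j) t) <=
  (\sum_(j in Q) m j) * (\sum_(j in P) m j * left_lim (v j) t).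
Proof.
move=> t0 eP eQ.
pose G := fun s => \sum_(j in P) \sum_(l in Q) m j * m l * (x l s - x j s).
pose g := fun s => \sum_(j in P) \sum_(l in Q) m j * m l * (v l s - v j s).
pose L := \sum_(j in P) \sum_(l in Q) m j * m l *
   (left_lim (v l) t - left_lim (v j) t).
have key : L <= 0.
  rewrite leNgt; apply/negP => L0.
  have gc : g s @[s --> t^'-] --> L.
    apply: cvg_bigsum => j _; apply: cvg_bigsum => l _.
    apply: cvgM; first exact: cvg_cst.
    by apply: cvgB; apply: vleft.
  have [e e0 He] := @near_left_itv _ t _ (@cvgr_gt _ _ _ _ _ L gc 0 L0).
  have [d d0 Hd] := @nocol t t0.
  have [me [hm hd1 hd2]] : exists me : R, [/\ 0 < me, me <= e & me <= d].
    exists (Num.min e d); split; first by rewrite lt_min e0 d0.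
      by rewrite ge_min lexx.
    by rewrite ge_min lexx orbT.
  have hs0 : t - me / 2 < t by exact: hlp1.
  have hs1 : t - d < t - me / 2 by exact: hlp2.
  have [s0pos _] := Hd (t - me / 2) hs1 hs0.
  have hder : forall c, c \in `]t - me / 2, t[ -> is_derive c 1 G (g c).
    move=> c; rewrite in_itv /= => /andP [c1 c2].
    have [c0 nc] := Hd c (lt_trans hs1 c1) c2.
    rewrite /G /g; apply: is_derive_bigsum => j _; apply: is_derive_bigsum => l _.
    have [dl _] := SCS_ode S c0 nc l.
    have [dj _] := SCS_ode S c0 nc j.
    exact: (is_deriveZ (m j * m l) (is_deriveB dl dj)).
  have hcon : {within `[t - me / 2, t], continuous G}.
    apply: continuous_in_subspaceT => c.
    rewrite in_setE /= in_itv /= => /andP [c1 c2].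
    have c0 : 0 < c by exact: lt_le_trans s0pos c1.
    rewrite /G; apply: cvg_bigsum => j _; apply: cvg_bigsum => l _.
    apply: cvgM; first exact: cvg_cst.
    by apply: cvgB; apply: xcont.
  have [c cin eq] := MVT hs0 hder hcon.
  have Gt : G t = 0.
    rewrite /G big1 // => j Pj; rewrite big1 // => l Ql.
    move: Pj Ql; rewrite eP eQ !inE => /andP [/eqP Jj _] /andP [/eqP Jl _].
    by rewrite Jj Jl subrr mulr0.
  have Gs0 : 0 <= G (t - me / 2).
    rewrite /G; apply: sumr_ge0 => j Pj; apply: sumr_ge0 => l Ql.
    move: Pj Ql; rewrite eP eQ !inE => /andP [_ jp] /andP [_ pl].
    apply: mulr_ge0; first exact: mulr_ge0.
    rewrite subr_ge0; apply: (SCS_order S (ltW s0pos)).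
    exact: leq_trans (ltnW jp) pl.
  have gc0 : 0 < g c.
    move: cin; rewrite in_itv /= => /andP [c1 c2].
    by have := He c (hlp3 _ _ _ _ hm hd1 c1) c2.
  have : 0 < g c * (t - (t - me / 2)) by rewrite mulr_gt0 // subr_gt0.
  by rewrite -eq Gt sub0r oppr_gt0 ltNge Gs0.
have eL : L = (\sum_(j in P) m j) * (\sum_(j in Q) m j * left_lim (v j) t) -
              (\sum_(j in P) m j * left_lim (v j) t) * (\sum_(j in Q) m j).
  rewrite /L !mulr_suml -sumrB; apply: eq_bigr => j _.
  rewrite !mulr_sumr -sumrB; apply: eq_bigr => l _.
  rewrite mulrBr; congr (_ - _); first by rewrite mulrA.
  by rewrite mulrAC.
by rewrite -subr_le0 (mulrC (\sum_(j in Q) m j)) -eL.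
Qed.

End Dyn.

Theorem lemma2p3 (R : realType) (omega phi : R -> R) (N : nat)
  (m : 'I_N -> R) (x0 v0 : 'I_N -> R) (x v : 'I_N -> R -> R) :
  standing_H omega phi ->
  (forall j, 0 < m j) -> \sum_(j : 'I_N) m j = 1 ->
  (forall j k : 'I_N, (j <= k)%N -> x0 j <= x0 k) ->
  sticky_CS m phi x0 v0 x v ->
  forall (i : 'I_N) (t : R), 0 < t ->
  forall k : 'I_N, k \in Jset x i t ->
  let psim := fun j => left_lim (psi m omega x v j) t in
  let avgJ := (\sum_(j in Jset x i t) m j * psim j) /
              (\sum_(j in Jset x i t) m j) in
  [/\ (\sum_(j : 'I_N | (ilo x i t <= j <= k)%N) m j * psim j) /
        (\sum_(j : 'I_N | (ilo x i t <= j <= k)%N) m j) >= avgJ,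
      avgJ = right_lim (psi m omega x v i) t
    & right_lim (psi m omega x v i) t >=
        (\sum_(j : 'I_N | (k <= j <= ihi x i t)%N) m j * psim j) /
        (\sum_(j : 'I_N | (k <= j <= ihi x i t)%N) m j)].
Proof.
move=> HH mpos msum x0ord S i t t0 k kJ psim avgJ.
have mge0 : forall j, 0 <= m j by move=> j; exact: ltW.
have t0' : 0 <= t by exact: ltW.
set J := Jset x i t.
set W := Om omega N m x i t.
set w := fun j => left_lim (v j) t.
have Jitv : forall j, (j \in J) = (ilo x i t <= j <= ihi x i t)%N.
  by move=> j; exact: (J_itv _ _ _ _ _ _ _ S i t j t0').
have hpsim : forall j, j \in J -> psim j = w j + W.
  move=> j Jj; rewrite /psim (psi_left_lim _ _ _ _ _ _ _ _ HH S j t t0).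
  congr (_ + _); apply: Om_eq.
  by move: Jj; rewrite inE => /eqP.
have sumA : forall A : {set 'I_N}, A \subset J ->
    \sum_(j in A) m j * psim j = (\sum_(j in A) m j * w j) + W * (\sum_(j in A) m j).
  move=> A /fintype.subsetP sA; rewrite mulr_sumr -big_split; apply: eq_bigr => j Aj.
  have Jj : j \in J by exact: sA.
  rewrite hpsim //.
  change (m j * (w j + W) = m j * w j + W * m j).
  by rewrite mulrDr (mulrC W).
have splitJ : forall p (F : 'I_N -> R), \sum_(j in J) F j =
    \sum_(j in [set j in J | (j < p)%N]) F j + \sum_(j in [set j in J | (p <= j)%N]) F j.
  move=> p F; rewrite (bigID (fun j : 'I_N => (j < p)%N)) /=; congr (_ + _).
    by apply: eq_bigl => y; rewrite [in RHS]finset.in_set.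
  by apply: eq_bigl => y; rewrite [in RHS]finset.in_set -leqNgt.
have hk : (ilo x i t <= k <= ihi x i t)%N by rewrite -Jitv.
case/andP: hk => hk1 hk2.
have subP : forall p, [set j in J | (j < p)%N] \subset J.
  by move=> p; apply/fintype.subsetP => y; rewrite finset.in_set => /andP [].
have subQ : forall p, [set j in J | (p <= j)%N] \subset J.
  by move=> p; apply/fintype.subsetP => y; rewrite finset.in_set => /andP [].
have pos : forall A : {set 'I_N}, k \in A -> 0 < \sum_(j in A) m j.
  move=> A kA; rewrite (bigD1 k) //=; apply: ltr_wpDr; last exact: mpos.
  by apply: sumr_ge0.
have ge0 : forall A : {set 'I_N}, 0 <= \sum_(j in A) m j.
  by move=> A; apply: sumr_ge0.
have coreP := fun p => core _ _ _ _ _ _ _ S mge0 i t p _ _ t0 erefl erefl.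
have e1 : forall F : 'I_N -> R, \sum_(j : 'I_N | (ilo x i t <= j <= k)%N) F j =
    \sum_(j in [set j in J | (j < k.+1)%N]) F j.
  move=> F; apply: eq_bigl => y; rewrite [in RHS]finset.in_set Jitv ltnS.
  apply/idP/idP => [/andP [a b]|/andP [/andP [a _] b]].
    by rewrite a b (leq_trans b hk2).
  by rewrite a b.
have e3 : forall F : 'I_N -> R, \sum_(j : 'I_N | (k <= j <= ihi x i t)%N) F j =
    \sum_(j in [set j in J | (k <= j)%N]) F j.
  move=> F; apply: eq_bigl => y; rewrite [in RHS]finset.in_set Jitv.
  apply/idP/idP => [/andP [a b]|/andP [/andP [_ a] b]].
    by rewrite a b (leq_trans hk1 a).
  by rewrite a b.
have kJ' : k \in J by [].
have mJ0 : \sum_(j in J) m j != 0 by rewrite gt_eqF // pos.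
have p2 : avgJ = right_lim (psi m omega x v i) t.
case: (pselect (collision_time x t)) => ct.
    rewrite (psi_right_col _ _ _ _ _ _ _ _ HH S i t t0 ct) /avgJ sumA //.
    by rewrite mulrDl -mulrA divff // mulr1.
  rewrite (psi_right_nc _ _ _ _ _ _ _ _ HH S i t t0 ct) /avgJ sumA //.
  have -> : \sum_(j in J) m j * w j = v i t * \sum_(j in J) m j.
    rewrite mulr_sumr; apply: eq_bigr => j Jj.
    have h := vcont_nc _ _ _ _ _ _ _ S j t t0 ct.
    have h' : v j s @[s --> t^'-] --> v j t by exact: cvg_within_filter.
    rewrite /w /left_lim (cvg_lim _ h') // (v_eq_nc _ _ _ _ _ _ _ S i j t t0 ct Jj).
    by rewrite mulrC.
  by rewrite -mulrDl mulfK.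
split => //.
- rewrite !e1 /avgJ !sumA // !(splitJ k.+1).
  apply: alg1 => //.
  apply: pos; rewrite finset.in_set kJ' /=; exact: ltnSn.
- rewrite -p2 !e3 /avgJ !sumA // !(splitJ k).
  apply: alg3 => //.
  by apply: pos; rewrite finset.in_set kJ' /=.
Qed.
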